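(* Assume $\Phi$ is an involution. Let $\overline\pi\in\arg\min_{\pi\in\mathcal{C}_{\mathrm{coh}}\cap\Pi}\mathbb{E}_{x\sim\mathcal{D}_{\mathcal{X}}}[\mathsf{B}_F(\pi(x)\parallel\pi^*(x))]$ be the Bregman projection of $\pi^*$ onto $\mathcal{C}_{\mathrm{coh}}\cap\Pi$ and $\epsilon=\mathbb{E}_{x\sim\mathcal{D}_{\mathcal{X}}}[\mathsf{B}_F(\pi^*(x)\parallel\overline\pi(x))]$. Let $\widehat\pi$ be the solution of $\min_{\pi\in\mathcal{C}_{\mathrm{coh}}\cap\Pi}\mathbb{E}_{x\sim\mathcal{D}_{\mathcal{X}}}[\mathsf{B}_F(\pi(x)\parallel\pi_0(x))]$. Then (all expectations over $x\sim\mathcal{D}_{\mathcal{X}}$) $$\mathbb{E}[\mathsf{B}_F(\pi^*(x)\parallel\widehat\pi(x))]-\mathbb{E}[\mathsf{B}_F(\pi^*(x)\parallel\pi_0(x))]\le-\mathbb{E}[\mathsf{B}_F(\widehat\pi(x)\parallel\pi_0(x))]+\mathbb{E}\big[\langle\pi^*(x)-\overline\pi(x),\nabla F(\pi_0(x))-\nabla F(\widehat\pi(x))\rangle\big].$$ If $F$ is $\mu$-strongly convex with respect to a norm $\|\cdot\|$ (dual norm $\|\cdot\|_*$), then $$\mathbb{E}[\mathsf{B}_F(\pi^*(x)\parallel\widehat\pi(x))]-\mathbb{E}[\mathsf{B}_F(\pi^*(x)\parallel\pi_0(x))]\le-\mathbb{E}[\mathsf{B}_F(\widehat\pi(x)\parallel\pi_0(x))]+\sqrt{\tfrac{2\epsilon}{\mu}}\sqrt{\mathbb{E}\big[\|\nabla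 F(\pi_0(x))-\nabla F(\widehat\pi(x))\|_*^2\big]}.$$ If furthermore $F$ is $L$-smooth, then with $D=\mathbb{E}[\mathsf{B}_F(\widehat\pi(x)\parallel\pi_0(x))]$, $$\mathbb{E}[\mathsf{B}_F(\pi^*(x)\parallel\widehat\pi(x))]-\mathbb{E}[\mathsf{B}_F(\pi^*(x)\parallel\pi_0(x))]\le-D+\frac{2L}{\mu}\sqrt{\epsilon D},$$ and the right-hand side is strictly negative whenever $\epsilon<\big(\frac{\mu}{2L}\big)^2D$.
   Context: $\mathcal{X},\mathcal{Y}$ finite; models are maps $\pi\colon\mathcal{X}\to\Delta(\mathcal{Y})$, $\Pi_{\mathrm{all}}=\Delta(\mathcal{Y})^{\mathcal{X}}$; $\Pi\subseteq\Pi_{\mathrm{all}}$ closed and convex; $\pi_0\in\Pi_{\mathrm{all}}$ baseline; $\pi^*\colon\mathcal{X}\to\Delta(\mathcal{Y})$ a reference model (not assumed coherent); $\mathcal{D}_{\mathcal{X}}$ a full-support distribution on $\mathcal{X}$. $\Phi\colon\mathcal{X}\to\mathcal{X}$ and $\mathcal{C}_{\mathrm{coh}}=\{\pi\in\Pi_{\mathrm{all}}:\pi(x)=\pi(\Phi(x))\ \forall x\}$. $F$ is convex, differentiable on the interior of its domain (which contains $\Delta(\mathcal{Y})$, all relevant values lying where $\nabla F$ is defined), $\mathsf{B}_F(p\parallel q)=F(p)-F(q)-\langle\nabla F(q),p-q\rangle$. $\mu$-strong convexity: $\mathsf{B}_F(p\parallel q)\ge\frac{\mu}{2}\|p-q\|^2$;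 $L$-smoothness: $\|\nabla F(p)-\nabla F(q)\|_*\le L\|p-q\|$. *)

(* Defs.v *)
From HB Require Import structures.
From mathcomp Require Import all_boot all_order all_algebra.
From mathcomp Require Import all_classical all_reals all_analysis.
Set Implicit Arguments. Unset Strict Implicit. Unset Printing Implicit Defensive.
Import Order.TTheory GRing.Theory Num.Theory.
Import numFieldNormedType.Exports.
Local Open Scope classical_set_scope.
Local Open Scope ring_scope.

Section Defs.
Variables (R : realType) (n : nat).
Notation vec := 'rV[R]_n.

Definition dotv (p q : vec) : R := \sum_(i < n) p ord0 i * q ord0 i.

Definition simplex : set vec :=
  [set p | (forall i, 0 <= p ord0 i) /\ \sum_(i < n) p ord0 i = 1].

Definition bregman (F : vec -> R) (gF : vec -> vec) (p q : vec) : R :=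
  F p - F q - dotv (gF q) (p - q).

Definition convex_dom (A : set vec) : Prop :=
  forall p q t, A p -> A q -> 0 <= t <= 1 -> A (t *: p + (1 - t) *: q).

Definition convex_on (A : set vec) (F : vec -> R) : Prop :=
  forall p q t, A p -> A q -> 0 <= t <= 1 ->
    F (t *: p + (1 - t) *: q) <= t * F p + (1 - t) * F q.

Definition gradient_on (A : set vec) (F : vec -> R) (gF : vec -> vec) : Prop :=
  forall q, A q -> differentiable F q /\ forall v, 'd F q v = dotv (gF q) v.

Definition is_norm (nrm : vec -> R) : Prop :=
  (forall p, 0 <= nrm p) /\ (forall p, nrm p = 0 -> p = 0) /\
  (forall (a : R) p, nrm (a *: p) = `|a| * nrm p) /\
  (forall p q, nrm (p + q) <= nrm p + nrm q).

Definition dual_norm (nrm : vec -> R) (g : vec) : R :=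
  sup [set dotv g v | v in [set v | nrm v <= 1]].

End Defs.

Section Models.
Variables (R : realType) (X : finType) (n : nat).
Notation vec := 'rV[R]_n.
Notation model := (X -> vec).

Definition Pi_all : set model := [set pi | forall x, simplex (pi x)].

Definition C_coh (Phi : X -> X) : set model :=
  [set pi | forall x, pi x = pi (Phi x)].

Definition expect (DX : X -> R) (f : X -> R) : R := \sum_(x : X) DX x * f x.

Definition full_support_distr (DX : X -> R) : Prop :=
  (forall x, 0 < DX x) /\ \sum_(x : X) DX x = 1.

Definition convex_models (P : set model) : Prop :=
  forall p q t, P p -> P q -> 0 <= t <= 1 ->
    P (fun x => t *: p x + (1 - t) *: q x).

(* Closedness in the (finite-dimensional) product topology, sequentially. *)
Definition closed_models (P : set model) : Prop :=
  forall (u : nat -> model) (l : model), (forall k, P (u k)) ->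
    (forall x, (fun k => u k x) @ \oo --> l x) -> P l.

Definition is_argmin (A : set model) (G : model -> R) (p : model) : Prop :=
  A p /\ forall q, A q -> G p <= G q.

End Models.
Arguments Pi_all {R X n}.
Arguments simplex {R n}.

(* Main.v *)
Require Import Defs.
From HB Require Import structures.
From mathcomp Require Import all_boot all_order all_algebra.
From mathcomp Require Import all_classical all_reals all_analysis.
From mathcomp.algebra_tactics Require Import ring lra.
Import Order.TTheory GRing.Theory Num.Theory.
Import numFieldNormedType.Exports.
Local Open Scope classical_set_scope.
Local Open Scope ring_scope.
Section N.
Variables (R : realType) (n : nat) (nrm : 'rV[R]_n -> R).
Hypothesis Hn : is_norm nrm.

Lemma nrm0 : nrm 0 = 0.
Proof. case: Hn => _ [_ [hZ _]]. by rewrite -(scale0r 0) hZ normr0 mul0r. Qed.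

Lemma nrmN v : nrm (- v) = nrm v.
Proof. case: Hn => _ [_ [hZ _]]. by rewrite -scaleN1r hZ normrN normr1 mul1r. Qed.

Lemma nrm_sum (I : Type) (r : seq I) (f : I -> 'rV[R]_n) :
  nrm (\sum_(i <- r) f i) <= \sum_(i <- r) nrm (f i).
Proof.
case: Hn => _ [_ [_ hT]].
elim: r => [|a r IH]; first by rewrite !big_nil nrm0.
rewrite !big_cons; apply: (le_trans (hT _ _)); exact: lerD.
Qed.

Lemma coord_le (v : 'rV[R]_n) i : `|v ord0 i| <= `|v|.
Proof.
have -> : `|v| = mx_norm v by [].
rewrite mx_normrE.
exact: (le_bigmax _ _ (ord0, i)).
Qed.

Lemma nrm_upper : exists2 C, 0 <= C & forall v, nrm v <= C * `|v|.
Proof.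
case: Hn => hP [_ [hZ _]].
exists (\sum_(i < n) nrm (delta_mx ord0 i)); first by apply: sumr_ge0 => i _.
move=> v; rewrite {1}(matrix_sum_delta v) big_ord1.
apply: (le_trans (nrm_sum _ _ _)); rewrite mulr_suml; apply: ler_sum => i _.
rewrite hZ mulrC; apply: ler_wpM2l => //; exact: coord_le.
Qed.

Lemma nrm_cont : continuous nrm.
Proof.
have [C C0 HC] := nrm_upper.
case: Hn => hP [_ [hZ hT]].
move=> x; apply/(@cvgrPdist_le _ _ _ _ (nbhs_filter x)) => e e0.
have Hc : (fun y : 'rV[R]_n => y) @ x --> x := cvg_id.
have C1 : 0 < C + 1 by rewrite ltr_wpDl.
have Hn' := (cvgrPdist_le _ _).1 Hc (e / (C + 1)) (divr_gt0 e0 C1).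
near=> y.
have hy : `|x - y| <= e / (C + 1) by near: y; exact: Hn'.
have h1 : `|nrm x - nrm y| <= nrm (x - y).
  have t1 := hT x (y - x); have t2 := hT y (x - y).
  rewrite addrCA subrr addr0 in t1; rewrite addrCA subrr addr0 in t2.
  rewrite -(nrmN (y - x)) opprB in t1.
  rewrite ler_norml; apply/andP; split; lra.
apply: (le_trans h1); apply: (le_trans (HC _)).
apply: (@le_trans _ _ ((C + 1) * (e / (C + 1)))).
  apply: ler_pM => //; first by rewrite lerDl.
by rewrite mulrC divfK // gt_eqF.
Unshelve. all: by end_near. Qed.

Lemma unit_sc (v : 'rV[R]_n) : v != 0 -> `| `|v|^-1 *: v | = 1.
Proof.
move=> v0; rewrite normrZ ger0_norm ?invr_ge0 // mulVf //.
by rewrite normr_eq0.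
Qed.

Lemma nrm_lower : exists2 c, 0 < c & forall v, c * `|v| <= nrm v.
Proof.
case: Hn => hP [h0 [hZ hT]].
have [n0|n_gt0] := posnP n.
  exists 1 => // v.
  have -> : v = 0 by apply/matrixP => i j; have := ltn_ord j; move: (nat_of_ord j) => k kn; exfalso; by rewrite n0 in kn.
  by rewrite normr0 mulr0 nrm0.
pose S := [set v : 'rV[R]_n | `|v| = 1].
pose w : 'rV[R]_n := const_mx 1.
have w0 : w != 0.
  apply/eqP => /matrixP /(_ ord0 (Ordinal n_gt0)); rewrite !mxE.
  by apply/eqP; exact: oner_neq0.
have S0 : S !=set0 by exists (`|w|^-1 *: w); exact: unit_sc.
have Sc : compact S.
  apply: bounded_closed_compact.
    exists 1; split => // M M1 x /= ->; exact: ltW.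
  have := (continuous_closedP _).1 (@norm_continuous R [the pseudoMetricNormedZmodType R of 'rV[R]_n]) _ (@closed_eq R 1).
  by move=> H; exact H.
have cS : {within S, continuous nrm} by apply: continuous_subspaceT; exact: nrm_cont.
have [c0 c0S Hmin] := EVT_min_rV S0 Sc cS.
have c0n : `|c0| = 1 by move: c0S; rewrite inE.
have c0pos : 0 < nrm c0.
  rewrite lt_def hP andbT; apply/eqP => /h0 c00.
  by move: c0n; rewrite c00 normr0 => /eqP; rewrite eq_sym oner_eq0.
exists (nrm c0) => // v.
have [->|v0] := eqVneq v 0; first by rewrite normr0 mulr0 hP.
have := Hmin (`|v|^-1 *: v); rewrite inE => /(_ (unit_sc _ v0)).
rewrite hZ ger0_norm ?invr_ge0 //.
have vp : 0 < `|v| by rewrite normr_gt0.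
by rewrite ler_pdivlMl // mulrC.
Qed.

Lemma dotvZr (g v : 'rV[R]_n) a : dotv g (a *: v) = a * dotv g v.
Proof. rewrite /dotv mulr_sumr; apply: eq_bigr => i _; rewrite mxE; ring. Qed.

Lemma dotv0r (g : 'rV[R]_n) : dotv g 0 = 0.
Proof. by rewrite -(scale0r 0) dotvZr mul0r. Qed.

Lemma dual_has_sup g : has_sup [set dotv g v | v in [set v | nrm v <= 1]].
Proof.
have [c c0 Hc] := nrm_lower.
split; first by exists 0, 0 => //=; [rewrite nrm0 | rewrite dotv0r].
exists (\sum_(i < n) `|g ord0 i| / c) => _ [v /= hv <-].
rewrite /dotv; apply: (le_trans (ler_norm _)); apply: (le_trans (ler_norm_sum _ _ _)).
apply: ler_sum => i _; rewrite normrM; apply: ler_wpM2l => //.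
rewrite -(mul1r c^-1) ler_pdivlMr // mulrC; apply: (le_trans _ (le_trans (Hc v) hv)).
by apply: ler_wpM2l; [exact: ltW | exact: coord_le].
Qed.

Lemma dual_ge0 g : 0 <= dual_norm nrm g.
Proof.
apply: sup_upper_bound; first exact: dual_has_sup.
by exists 0 => //=; [rewrite nrm0 | rewrite dotv0r].
Qed.

Lemma dual_le g v : dotv g v <= dual_norm nrm g * nrm v.
Proof.
case: Hn => hP [h0 [hZ hT]].
have [->|v0] := eqVneq v 0; first by rewrite dotv0r nrm0 mulr0.
have np : 0 < nrm v.
  rewrite lt_def hP andbT; apply/eqP => /h0 /eqP; by rewrite (negbTE v0).
have : dotv g ((nrm v)^-1 *: v) <= dual_norm nrm g.
  apply: sup_upper_bound; first exact: dual_has_sup.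
  exists ((nrm v)^-1 *: v) => //=.
  by rewrite hZ ger0_norm ?invr_ge0 ?hP // mulVf // gt_eqF.
by rewrite dotvZr mulrC ler_pdivrMr.
Qed.
End N.
Lemma cs_sq (R : realType) (X : finType) (w a b : X -> R) :
  (forall x, 0 <= w x) ->
  (\sum_x w x * (a x * b x)) ^+ 2 <= (\sum_x w x * a x ^+ 2) * (\sum_x w x * b x ^+ 2).
Proof.
move=> w0.
set A := \sum_x w x * a x ^+ 2; set B := \sum_x w x * b x ^+ 2.
set C := \sum_x w x * (a x * b x).
have HQ t : 0 <= t ^+ 2 * A - 2 * t * C + B.
  have -> : t ^+ 2 * A - 2 * t * C + B = \sum_x w x * (t * a x - b x) ^+ 2.
    rewrite /A /B /C !mulr_sumr -sumrB -big_split /=; apply: eq_bigr => x _; ring.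
  by apply: sumr_ge0 => x _; rewrite mulr_ge0 // sqr_ge0.
have A0 : 0 <= A by apply: sumr_ge0 => x _; rewrite mulr_ge0 // sqr_ge0.
have B0 : 0 <= B by apply: sumr_ge0 => x _; rewrite mulr_ge0 // sqr_ge0.
have [Az|Ap] := eqVneq A 0.
  have Hz := psumr_eq0P (fun x _ => mulr_ge0 (w0 x) (sqr_ge0 (a x))) Az.
  have -> : C = 0.
    rewrite /C big1 // => x _.
    have : (w x * a x) ^+ 2 = 0 by rewrite exprMn expr2 -mulrA (Hz x) // mulr0.
    by move/eqP; rewrite sqrf_eq0 mulrA => /eqP ->; rewrite mul0r.
  by rewrite Az expr0n /= mul0r.
have Apos : 0 < A by rewrite lt_def Ap A0.
have := HQ (C / A).
have e : C / A * A = C by rewrite divfK.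
move: (C / A) e => t <-; nra.
Qed.

Lemma cs_sqrt (R : realType) (X : finType) (w a b : X -> R) :
  (forall x, 0 <= w x) ->
  \sum_x w x * (a x * b x) <=
  Num.sqrt (\sum_x w x * a x ^+ 2) * Num.sqrt (\sum_x w x * b x ^+ 2).
Proof.
move=> w0.
have A0 : 0 <= \sum_x w x * a x ^+ 2 by apply: sumr_ge0 => x _; rewrite mulr_ge0 // sqr_ge0.
have B0 : 0 <= \sum_x w x * b x ^+ 2 by apply: sumr_ge0 => x _; rewrite mulr_ge0 // sqr_ge0.
rewrite -sqrtrM //; apply: (le_trans (ler_norm _)); rewrite -sqrtr_sqr.
by rewrite ler_sqrt ?mulr_ge0 //; exact: cs_sq.
Qed.

Lemma dotvBr (R : realType) n (g p q : 'rV[R]_n) : dotv g (p - q) = dotv g p - dotv g q.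
Proof. by rewrite /dotv -sumrB; apply: eq_bigr => i _; rewrite !mxE mulrBr. Qed.
Lemma dotvBl (R : realType) n (g p q : 'rV[R]_n) : dotv (p - q) g = dotv p g - dotv q g.
Proof. by rewrite /dotv -sumrB; apply: eq_bigr => i _; rewrite !mxE mulrBl. Qed.
Lemma dotvC (R : realType) n (p q : 'rV[R]_n) : dotv p q = dotv q p.
Proof. by rewrite /dotv; apply: eq_bigr => i _; rewrite mulrC. Qed.
Lemma dotvZ (R : realType) n (g v : 'rV[R]_n) a : dotv g (a *: v) = a * dotv g v.
Proof. rewrite /dotv mulr_sumr; apply: eq_bigr => i _; rewrite mxE; ring. Qed.

Lemma dotvDr (R : realType) n (g p q : 'rV[R]_n) : dotv g (p + q) = dotv g p + dotv g q.
Proof. by rewrite /dotv -big_split; apply: eq_bigr => i _; rewrite !mxE mulrDr. Qed.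

Lemma opt_cond (R : realType) (X : finType) (n : nat)
  (DX : X -> R) (Phi : X -> X) (Pi : set (X -> 'rV[R]_n))
  (pi0 pibar pihat : X -> 'rV[R]_n)
  (dom : set 'rV[R]_n) (F : 'rV[R]_n -> R) (gF : 'rV[R]_n -> 'rV[R]_n) :
  (forall x, 0 <= DX x) -> convex_models Pi ->
  gradient_on (interior dom) F gF ->
  (forall x, interior dom (pihat x)) ->
  (C_coh Phi `&` Pi) pibar ->
  is_argmin (C_coh Phi `&` Pi)
    (fun pi => expect DX (fun x => bregman F gF (pi x) (pi0 x))) pihat ->
  0 <= expect DX (fun x => dotv (gF (pihat x) - gF (pi0 x)) (pibar x - pihat x)).
Proof.
move=> D0 cvx grad inth [cohb Pib] [[cohh Pih] hmin].
pose v x := pibar x - pihat x.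
pose pt (t : R) := fun x => t *: pibar x + (1 - t) *: pihat x.
have ptE t x : pt t x = t *: v x + pihat x.
  by apply/matrixP => i j; rewrite !mxE; ring.
have ptin t : 0 <= t <= 1 -> (C_coh Phi `&` Pi) (pt t).
  move=> ht; split; last exact: cvx.
  by move=> x; rewrite /pt -cohb -cohh.
pose c x := dotv (gF (pi0 x)) (v x).
pose f (t : R) := \sum_x DX x * (t^-1 * (F (t *: v x + pihat x) - F (pihat x)) - c x).
have fcvg : f t @[t --> 0^'] --> \sum_x DX x * (dotv (gF (pihat x)) (v x) - c x).
  apply: cvg_big => //; first exact: add_continuous.
  move=> x _; apply: cvgMl_tmp; apply: cvgB; last exact: cvg_cst.
  have [dF dFE] := grad _ (inth x).
  have H := @diff_derivable _ _ _ _ _ (v x) dF.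
  rewrite /derivable in H.
  have H2 := H. rewrite -/(derive _ _ _) deriveE // dFE in H2.
  exact: H2.
have incl : (0:R)^'+ --> (0:R)^'.
  move=> P; rewrite !nbhs_filterE /dnbhs /= /within /=; apply: filterS => y Hy y0; apply: Hy; exact: lt0r_neq0.
have fr := cvg_trans (cvg_app f incl) fcvg.
have : 0 <= \sum_x DX x * (dotv (gF (pihat x)) (v x) - c x).
  apply: (@cvgr_to_ge R _ (at_right_proper_filter (0:R)) R f _ 0 fr); near=> t.
  have t0 : 0 < t by near: t; exact: nbhs_right_gt.
  have t1 : t <= 1 by near: t; exact: nbhs_right_ltW ltr01.
  have hle := hmin (pt t) (ptin t _).
  rewrite t1 ltW // in hle.
  have hle' := hle isT.
  rewrite -subr_ge0 /expect -sumrB in hle'.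
  have -> : f t = t^-1 * \sum_x DX x * ((F (t *: v x + pihat x) - F (pihat x)) - t * c x).
    rewrite /f mulr_sumr; apply: eq_bigr => x _; field; exact: lt0r_neq0.
  apply: mulr_ge0; first by rewrite invr_ge0 ltW.
  apply: (le_trans hle'); rewrite le_eqVlt; apply/orP; left; apply/eqP.
  apply: eq_bigr => x _; rewrite /bregman ptE.
  have -> : t *: v x + pihat x - pi0 x = t *: v x + (pihat x - pi0 x) by rewrite addrA.
  rewrite (dotvDr _ _ (gF (pi0 x)) (t *: v x) (pihat x - pi0 x)) (dotvZ _ _ (gF (pi0 x)) (v x) t) /c; ring.
move=> h; apply: (le_trans h); rewrite le_eqVlt; apply/orP; left; apply/eqP.
rewrite /expect; apply: eq_bigr => x _; by rewrite dotvBl.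
Unshelve. all: by end_near.
Qed.

Lemma three_point (R : realType) n (F : 'rV[R]_n -> R) gF (a h p : 'rV[R]_n) :
  bregman F gF a h - bregman F gF a p = - bregman F gF h p + dotv (gF p - gF h) (a - h).
Proof. rewrite /bregman !dotvBr !dotvBl; ring. Qed.

Lemma split_dot (R : realType) n (g0 gh a b h : 'rV[R]_n) :
  dotv (g0 - gh) (a - h) = dotv (a - b) (g0 - gh) - dotv (gh - g0) (b - h).
Proof. rewrite /dotv -sumrB; apply: eq_bigr => i _; rewrite !mxE; ring. Qed.

Theorem theorem2 (R : realType) (X : finType) (n : nat)
  (DX : X -> R) (Phi : X -> X) (Pi : set (X -> 'rV[R]_n))
  (pi0 pistar pibar pihat : X -> 'rV[R]_n)
  (dom : set 'rV[R]_n) (F : 'rV[R]_n -> R) (gF : 'rV[R]_n -> 'rV[R]_n) :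
  full_support_distr DX ->
  (forall x, Phi (Phi x) = x) ->
  Pi `<=` Pi_all -> closed_models Pi -> convex_models Pi ->
  Pi_all pi0 -> (forall x, simplex (pistar x)) ->
  simplex `<=` dom -> convex_dom dom -> convex_on dom F ->
  gradient_on (interior dom) F gF ->
  (forall x, interior dom (pi0 x)) ->
  (forall x, interior dom (pibar x)) ->
  (forall x, interior dom (pihat x)) ->
  is_argmin (C_coh Phi `&` Pi)
    (fun pi => expect DX (fun x => bregman F gF (pi x) (pistar x))) pibar ->
  is_argmin (C_coh Phi `&` Pi)
    (fun pi => expect DX (fun x => bregman F gF (pi x) (pi0 x))) pihat ->
  let eps := expect DX (fun x => bregman F gF (pistar x) (pibar x)) in
  let Dv := expect DX (fun x => bregman F gF (pihat x) (pi0 x)) in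
  let lhs := expect DX (fun x => bregman F gF (pistar x) (pihat x))
             - expect DX (fun x => bregman F gF (pistar x) (pi0 x)) in
  (* first bound *)
  lhs <= - Dv + expect DX (fun x => dotv (pistar x - pibar x) (gF (pi0 x) - gF (pihat x)))
  /\
  (forall (nrm : 'rV[R]_n -> R) (mu : R), is_norm nrm -> 0 < mu ->
    (* mu-strong convexity of F w.r.t. nrm *)
    (forall p q, dom p -> interior dom q -> mu / 2 * nrm (p - q) ^+ 2 <= bregman F gF p q) ->
    lhs <= - Dv + Num.sqrt (2 * eps / mu) *
             Num.sqrt (expect DX (fun x => dual_norm nrm (gF (pi0 x) - gF (pihat x)) ^+ 2))
    /\
    (forall L : R, 0 < L ->
      (* L-smoothness of F w.r.t. nrm *)
      (forall p q, interior dom p -> interior dom q ->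
         dual_norm nrm (gF p - gF q) <= L * nrm (p - q)) ->
      lhs <= - Dv + 2 * L / mu * Num.sqrt (eps * Dv)
      /\ (eps < (mu / (2 * L)) ^+ 2 * Dv -> - Dv + 2 * L / mu * Num.sqrt (eps * Dv) < 0))).
Proof.
move=> [Dp _] Hinv HPi Hcl Hcvx Hpi0 Hps Hsd Hcd Hcf Hgrad I0 Ib Ih Hbar Hhat eps Dv lhs.
have D0 x : 0 <= DX x by exact: ltW.
set T := expect DX (fun x => dotv (pistar x - pibar x) (gF (pi0 x) - gF (pihat x))).
set P := expect DX (fun x => dotv (gF (pihat x) - gF (pi0 x)) (pibar x - pihat x)).
have P0 : 0 <= P.
  exact: (opt_cond _ _ _ DX Phi Pi pi0 pibar pihat dom F gF D0 Hcvx Hgrad Ih Hbar.1 Hhat).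
have key : lhs = - Dv + T - P.
  rewrite /lhs /Dv /T /P /expect -sumrB -addrA -sumrB -sumrN -big_split.
  apply: eq_bigr => x _; rewrite -mulrBr three_point (split_dot _ _ _ _ _ (pibar x)).
  rewrite /=; ring.
have part1 : lhs <= - Dv + T by rewrite key; lra.
split => // nrm mu Hn mu0 Hsc.
have sq p q : dom p -> interior dom q -> nrm (p - q) ^+ 2 <= 2 / mu * bregman F gF p q.
  move=> dp iq; have h := Hsc p q dp iq.
  have e : 2 / mu * (mu / 2 * nrm (p - q) ^+ 2) = nrm (p - q) ^+ 2.
    by field; rewrite gt_eqF.
  rewrite -{1}e; apply: ler_wpM2l => //; apply: divr_ge0 => //; exact: ltW.
have Bge p q : dom p -> interior dom q -> 0 <= bregman F gF p q.
  move=> dp iq; apply: le_trans (Hsc p q dp iq).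
  by rewrite mulr_ge0 ?sqr_ge0 // divr_ge0 // ltW.
have dA x : dom (pistar x) := Hsd _ (Hps x).
have dH x : dom (pihat x) := interior_subset (Ih x).
have eps0 : 0 <= eps by apply: sumr_ge0 => x _; rewrite mulr_ge0 // Bge.
have Dv0 : 0 <= Dv by apply: sumr_ge0 => x _; rewrite mulr_ge0 // Bge.
have NA : expect DX (fun x => nrm (pistar x - pibar x) ^+ 2) <= 2 * eps / mu.
  have -> : 2 * eps / mu = 2 / mu * eps by rewrite mulrAC.
  rewrite /eps /expect mulr_sumr; apply: ler_sum => x _.
  rewrite [X in _ <= X]mulrCA; apply: ler_wpM2l => //; exact: sq.
have TB : T <= Num.sqrt (expect DX (fun x => nrm (pistar x - pibar x) ^+ 2)) *
   Num.sqrt (expect DX (fun x => dual_norm nrm (gF (pi0 x) - gF (pihat x)) ^+ 2)).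
  apply: le_trans (cs_sqrt _ _ DX (fun x => nrm (pistar x - pibar x))
     (fun x => dual_norm nrm (gF (pi0 x) - gF (pihat x))) D0).
  rewrite /T /expect; apply: ler_sum => x _; apply: ler_wpM2l => //.
  rewrite dotvC mulrC; exact: dual_le.
have e0m : 0 <= 2 * eps / mu by rewrite divr_ge0 ?mulr_ge0 // ltW.
have part2 : lhs <= - Dv + Num.sqrt (2 * eps / mu) *
   Num.sqrt (expect DX (fun x => dual_norm nrm (gF (pi0 x) - gF (pihat x)) ^+ 2)).
  apply: (le_trans part1); rewrite lerD2l; apply: (le_trans TB).
  by apply: ler_wpM2r; [exact: sqrtr_ge0 | rewrite ler_sqrt].
split => // L L0 Hsm.
have ED : expect DX (fun x => dual_norm nrm (gF (pi0 x) - gF (pihat x)) ^+ 2)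
   <= L ^+ 2 * (2 / mu * Dv).
  rewrite /Dv /expect !mulr_sumr; apply: ler_sum => x _.
  have h1 := Hsm _ _ (I0 x) (Ih x).
  have h2 : dual_norm nrm (gF (pi0 x) - gF (pihat x)) ^+ 2 <= L ^+ 2 * nrm (pi0 x - pihat x) ^+ 2.
    rewrite -exprMn !expr2; apply: ler_pM => //; exact: dual_ge0.
  have h3 : nrm (pi0 x - pihat x) = nrm (pihat x - pi0 x) by rewrite -(nrmN _ _ nrm Hn) opprB.
  have h4 := sq _ _ (dH x) (I0 x).
  rewrite h3 in h2.
  apply: le_trans (ler_wpM2l (D0 x) (le_trans h2 (ler_wpM2l (sqr_ge0 L) h4))) _.
  rewrite le_eqVlt; apply/orP; left; apply/eqP; ring.
have kp : 0 < 2 * L / mu by rewrite divr_gt0 // mulr_gt0.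
have part3 : Num.sqrt (2 * eps / mu) *
   Num.sqrt (expect DX (fun x => dual_norm nrm (gF (pi0 x) - gF (pihat x)) ^+ 2))
   <= 2 * L / mu * Num.sqrt (eps * Dv).
  apply: le_trans (ler_wpM2l (sqrtr_ge0 _) (_ : _ <= Num.sqrt (L ^+ 2 * (2 / mu * Dv)))) _.
    by rewrite ler_sqrt // mulr_ge0 ?sqr_ge0 // mulr_ge0 // divr_ge0 // ltW.
  rewrite -sqrtrM //.
  have -> : 2 * eps / mu * (L ^+ 2 * (2 / mu * Dv)) = (2 * L / mu) ^+ 2 * (eps * Dv) by ring.
  by rewrite sqrtrM ?sqr_ge0 // sqrtr_sqr ger0_norm // ltW.
split; first by apply: (le_trans part2); rewrite lerD2l.
move=> He.
have c0 : 0 < (mu / (2 * L)) ^+ 2 by rewrite exprn_gt0 // divr_gt0 // mulr_gt0.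
have Dvp : 0 < Dv.
  by have := le_lt_trans eps0 He; rewrite pmulr_rgt0.
have hs : Num.sqrt (eps * Dv) < Dv / (2 * L / mu).
  have dk : 0 < Dv / (2 * L / mu) by rewrite divr_gt0.
  rewrite -(ger0_norm (ltW dk)) -sqrtr_sqr ltr_sqrt ?exprn_gt0 //.
  have -> : (Dv / (2 * L / mu)) ^+ 2 = (mu / (2 * L)) ^+ 2 * Dv * Dv.
    by field; rewrite !gt_eqF.
  by rewrite ltr_pM2r.
move: hs; rewrite -(ltr_pM2l kp) [X in _ < X]mulrC divfK ?gt_eqF // => h.
lra.
Qed.
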